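(* Consider the one-hidden-layer network with scalar input $u^{\mathrm{NN}}(x;\theta)=\frac{1}{\sqrt m}\sum_{i=1}^mW^1_i\sigma(W^0_ix)$, $x\in\mathbb{R}$, $\theta=(W^0,W^1)\in\mathbb{R}^m\times\mathbb{R}^m$, with initialization $\theta_0=(W^0(0),W^1(0))$ having i.i.d. entries of mean $0$, variance $1$ and finite moments of all orders. Let $T\subset\mathbb{R}$ be a convex compact set, $k\geq1$ an integer, and let $\sigma$ satisfy the activation assumption below for $k+2$. Then for any $\delta>0$ there exist functions $B(m)$ with $B(m)\to\infty$ as $m\to\infty$ and $\eta(\varepsilon)$ such that, with probability at least $1-\delta$ over the initialization, for every $\varepsilon>0$, $$\sup_{x\in T}\Big\|\nabla_\theta\frac{d^ku^{\mathrm{NN}}}{dx^k}(x;\theta)-\nabla_\theta\frac{d^ku^{\mathrm{NN}}}{dx^k}(x;\theta_0)\Big\|_2\leq\varepsilon$$ for all $W^0,W^1$ satisfying $\|W^0-W^0(0)\|_2,\|W^1-W^1(0)\|_2\leq B(m)\eta(\varepsilon)$.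
   Context: Activation assumption for an integer $k$: $\sigma\in C^k(\mathbb{R})$ and there are positive constants $l_1,\dots,l_k$ with $\sup_x|\sigma^{(j)}(x)|/(1+|x|^{l_j})<\infty$, $j=1,\dots,k$. *)

(* Defs.v *)
From HB Require Import structures.
From mathcomp Require Import all_boot all_order all_algebra.
From mathcomp Require Import all_classical all_reals all_analysis.
Set Implicit Arguments. Unset Strict Implicit. Unset Printing Implicit Defensive.
Import Order.TTheory GRing.Theory Num.Theory.
Import numFieldNormedType.Exports.
Local Open Scope classical_set_scope.
Local Open Scope ring_scope.

Section defs.
Variable R : realType.

Definition convex_R (T : set R) : Prop :=
  forall x y t, T x -> T y -> 0 <= t -> t <= 1 -> T (t * x + (1 - t) * y).

Definition activation_assumption (k : nat) (sigma : R -> R) : Prop :=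
  (forall j, (j < k)%N -> forall x, derivable (derive1n j sigma) x 1) /\
  continuous (derive1n k sigma) /\
  exists l : nat -> R,
    forall j, (1 <= j <= k)%N ->
      0 < l j /\ exists C : R, forall x,
        `|derive1n j sigma x| <= C * (1 + `|x| `^ l j).

Definition uNN (m : nat) (sigma : R -> R) (W0 W1 : 'I_m -> R) (x : R) : R :=
  (Num.sqrt (m%:R))^-1 * \sum_(i < m) W1 i * sigma (W0 i * x).

Definition dkuNN (k m : nat) (sigma : R -> R) (W0 W1 : 'I_m -> R) (x : R) : R :=
  derive1n k (uNN sigma W0 W1) x.

Definition upd (m : nat) (W : 'I_m -> R) (i : 'I_m) (t : R) : 'I_m -> R :=
  fun j => if j == i then t else W j.

Definition grad0 (k m : nat) (sigma : R -> R) (W0 W1 : 'I_m -> R) (x : R)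
    (i : 'I_m) : R :=
  derive1 (fun t => dkuNN k sigma (upd W0 i t) W1 x) (W0 i).
Definition grad1 (k m : nat) (sigma : R -> R) (W0 W1 : 'I_m -> R) (x : R)
    (i : 'I_m) : R :=
  derive1 (fun t => dkuNN k sigma W0 (upd W1 i t) x) (W1 i).

Definition norm2 (m : nat) (V : 'I_m -> R) : R :=
  Num.sqrt (\sum_(i < m) V i ^+ 2).

Definition grad_diff_norm (k m : nat) (sigma : R -> R)
    (W0 W1 V0 V1 : 'I_m -> R) (x : R) : R :=
  Num.sqrt (\sum_(i < m) (grad0 k sigma W0 W1 x i - grad0 k sigma V0 V1 x i) ^+ 2
          + \sum_(i < m) (grad1 k sigma W0 W1 x i - grad1 k sigma V0 V1 x i) ^+ 2).

Definition mutually_independent d (Omega : measurableType d) (I : eqType)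
    (P : probability Omega R) (Z : I -> Omega -> R) : Prop :=
  forall (J : seq I) (B : I -> set R), uniq J ->
    (forall j, measurable (B j)) ->
    fine (P [set w | forall j, j \in J -> B j (Z j w)]) =
    \prod_(j <- J) fine (P (Z j @^-1` B j)).

Definition identically_distributed d (Omega : measurableType d) (I : Type)
    (P : probability Omega R) (Z : I -> Omega -> R) : Prop :=
  forall i j (B : set R), measurable B -> P (Z i @^-1` B) = P (Z j @^-1` B).

Definition iid_init d (Omega : measurableType d) (I : eqType)
    (P : probability Omega R) (Z : I -> Omega -> R) : Prop :=
  (forall j, measurable_fun setT (Z j)) /\
  mutually_independent P Z /\ identically_distributed P Z /\
  (forall j (p : nat), P.-integrable setT (fun w => ((Z j w) ^+ p)%:E)) /\
  (forall j, (\int[P]_w (Z j w)%:E = 0)%E) /\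
  (forall j, (\int[P]_w ((Z j w - fine (\int[P]_v (Z j v)%:E)) ^+ 2)%:E = 1)%E).

End defs.

(* Main.v *)
Require Import Defs.
From HB Require Import structures.
From mathcomp Require Import all_boot all_order all_algebra.
From mathcomp Require Import all_classical all_reals all_analysis.
From mathcomp Require Import ring lra zify measurable_realfun.
Import Order.TTheory GRing.Theory Num.Theory.
Import numFieldNormedType.Exports.
Local Open Scope classical_set_scope.
Local Open Scope ring_scope.
Set Implicit Arguments. Unset Strict Implicit. Unset Printing Implicit Defensive.

Lemma is_derive1_val (R : realType) (f : R -> R) (x df : R) :
  is_derive x 1 f df -> derive1 f x = df.
Proof. by move=> H; rewrite derive1E derive_val. Qed.

Lemma der_comp_lin (R : realType) (g : R -> R) (a x : R) :
  derivable g (a * x) 1 ->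
  is_derive x 1 (fun y => g (a * y)) (a * derive1 g (a * x)).
Proof.
move=> dg.
have dl : forall y : R, derivable (fun y : R => a * y) y 1.
  move=> y; apply: derivableM; [exact: derivable_cst| exact: derivable_id].
have dc : derivable (fun y => g (a * y)) x 1.
  apply/derivable1_diffP.
  have -> : (fun y => g (a * y)) = g \o (fun y => a * y) by [].
  apply: differentiable_comp; [exact/derivable1_diffP | exact/derivable1_diffP].
apply: DeriveDef => //.
rewrite -derive1E.
have -> : (fun y => g (a * y)) = g \o (fun y => a * y) by [].
rewrite derive1_comp //.
rewrite derive1Ml; last exact: derivable_id.
by rewrite derive1_id mulr1 mulrC.
Qed.

Lemma is_derive_sumf (R : realType) n (h : 'I_n -> R -> R) (dh : 'I_n -> R) (x : R) :
  (forall i, is_derive x 1 (h i) (dh i)) ->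
  is_derive x 1 (fun y => \sum_(i < n) h i y) (\sum_(i < n) dh i).
Proof.
move=> H; rewrite -fct_sumE; exact: is_derive_sum.
Qed.

Lemma is_deriveMcst (R : realType) (f : R -> R) (c x df : R) :
  is_derive x 1 f df -> is_derive x 1 (fun y => c * f y) (c * df).
Proof.
move=> H.
have -> : (fun y => c * f y) = c *: f by [].
have := @is_deriveZ R R R f c x 1 df H. by [].
Qed.

Lemma dk_formula (R : realType) (m : nat) (sigma : R -> R) (W0 W1 : 'I_m -> R) (j : nat) :
  (forall i, (i < j)%N -> forall x, derivable (derive1n i sigma) x 1) ->
  derive1n j (uNN sigma W0 W1) = fun x =>
    (Num.sqrt (m%:R))^-1 * \sum_(i < m) W1 i * (W0 i ^+ j * derive1n j sigma (W0 i * x)).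
Proof.
elim: j => [_|j IH Hd].
  by apply/funext => x; rewrite /uNN /=; congr (_ * _); apply: eq_bigr => i _; rewrite expr0 mul1r.
rewrite derive1nS IH; last by move=> i Hi; apply: Hd; apply: ltnW.
apply/funext => x; apply: is_derive1_val.
apply: is_deriveMcst.
apply: is_derive_eq.
  apply: is_derive_sumf => i.
  apply: is_deriveMcst. apply: is_deriveMcst.
  apply: der_comp_lin. exact: Hd.
apply: eq_bigr => i _.
by rewrite -derive1nS exprS; ring.
Qed.

Lemma der_pow_comp (R : realType) (g : R -> R) (n : nat) (x t : R) :
  derivable g (t * x) 1 ->
  is_derive t 1 (fun u => u ^+ n * g (u * x))
    (n%:R * t ^+ n.-1 * g (t * x) + t ^+ n * (x * derive1 g (t * x))).
Proof.
move=> dg.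
have h1 : is_derive t 1 (fun u : R => u ^+ n) (n%:R * t ^+ n.-1).

  apply: DeriveDef; first exact: exprn_derivable.
  by rewrite exp_derive /GRing.scale /= mulr1.
have h2 : is_derive t 1 (fun u => g (u * x)) (x * derive1 g (x * t)).
  have -> : (fun u => g (u * x)) = (fun u => g (x * u)) by apply/funext => u; rewrite mulrC.
  by apply: der_comp_lin; rewrite mulrC.
have := @is_deriveM R R (fun u => u ^+ n) (fun u => g (u * x)) t 1 _ _ h1 h2.
move=> H; apply: (is_derive_eq H).
rewrite (mulrC x t). rewrite /GRing.scale /=. ring.
Qed.

Definition hfun (R : realType) (sigma : R -> R) (k : nat) (a x : R) :=
  a ^+ k * derive1n k sigma (a * x).
Definition phifun (R : realType) (sigma : R -> R) (k : nat) (a x : R) :=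
  k%:R * a ^+ k.-1 * derive1n k sigma (a * x) + a ^+ k * (x * derive1n k.+1 sigma (a * x)).

Lemma sum_if_eq (R : realType) m (i : 'I_m) (a : R) :
  \sum_(j < m) (if j == i then a else 0) = a.
Proof.
by rewrite (bigD1 i) //= eqxx big1 ?addr0 // => j /negbTE ->.
Qed.

Lemma grad0_eq (R : realType) (k m : nat) (sigma : R -> R) (W0 W1 : 'I_m -> R) (x : R) (i : 'I_m) :
  (forall j, (j < k.+1)%N -> forall y, derivable (derive1n j sigma) y 1) ->
  grad0 k sigma W0 W1 x i = (Num.sqrt (m%:R))^-1 * (W1 i * phifun sigma k (W0 i) x).
Proof.
move=> Hd; rewrite /grad0 /dkuNN.
have -> : (fun t => derive1n k (uNN sigma (upd W0 i t) W1) x) =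
  (fun t => (Num.sqrt (m%:R))^-1 * \sum_(j < m) W1 j * ((upd W0 i t j) ^+ k *
       derive1n k sigma (upd W0 i t j * x))).
  apply/funext => t; rewrite dk_formula //.
  by move=> j Hj; apply: Hd; apply: ltnW.
apply: is_derive1_val; apply: is_deriveMcst.
rewrite -(sum_if_eq i (W1 i * phifun sigma k (W0 i) x)).
apply: is_derive_sumf => j.
rewrite /upd; case: (eqVneq j i) => [->|ne].
  apply: is_deriveMcst. apply: der_pow_comp. exact: Hd.
exact: is_derive_cst.
Qed.

Lemma grad1_eq (R : realType) (k m : nat) (sigma : R -> R) (W0 W1 : 'I_m -> R) (x : R) (i : 'I_m) :
  (forall j, (j < k)%N -> forall y, derivable (derive1n j sigma) y 1) ->
  grad1 k sigma W0 W1 x i = (Num.sqrt (m%:R))^-1 * hfun sigma k (W0 i) x.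
Proof.
move=> Hd; rewrite /grad1 /dkuNN.
have -> : (fun t => derive1n k (uNN sigma W0 (upd W1 i t)) x) =
  (fun t => (Num.sqrt (m%:R))^-1 * \sum_(j < m) (upd W1 i t j) * (W0 j ^+ k *
       derive1n k sigma (W0 j * x))).
  by apply/funext => t; rewrite dk_formula.
apply: is_derive1_val; apply: is_deriveMcst.
rewrite -(sum_if_eq i (hfun sigma k (W0 i) x)).
apply: is_derive_sumf => j.
rewrite /upd; case: (eqVneq j i) => [->|ne].
  have -> : (fun y : R => y * (W0 i ^+ k * derive1n k sigma (W0 i * x))) =
    (fun y => (W0 i ^+ k * derive1n k sigma (W0 i * x)) * y) by apply/funext => y; rewrite mulrC.
  rewrite -[hfun _ _ _ _]mulr1; apply: is_deriveMcst; exact: is_derive_id.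
exact: is_derive_cst.
Qed.

Lemma lip_bound (R : realType) (f df : R -> R) (rho L a b : R) :
  (forall t : R, is_derive t 1 f (df t)) ->
  (forall t, `|t| <= rho -> `|df t| <= L) ->
  `|a| <= rho -> `|b| <= rho -> `|f b - f a| <= L * `|b - a|.
Proof.
move=> Hd Hb.
wlog ab : a b / a <= b.
  move=> W ha hb; case: (leP a b) => [h|h]; first exact: W.
  by rewrite distrC (distrC b a); apply: W => //; apply: ltW.
move=> ha hb.
have cf : continuous f.
  move=> t; apply: differentiable_continuous; apply/derivable1_diffP.
  have := Hd t; case => dd _; exact: dd.
have [c cab ->] := @MVT_segment R f df a b ab (fun t _ => Hd t) (continuous_subspaceT cf).
rewrite normrM; apply: ler_wpM2r; first exact: normr_ge0.
apply: Hb; move: cab; rewrite in_itv /= => /andP [h1 h2].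
move: ha hb; rewrite !ler_norml => /andP [a1 a2] /andP [b1 b2].
apply/andP; split; [exact: le_trans a1 h1 | exact: le_trans h2 b2].
Qed.

Definition Tm (R : realType) (sigma : R -> R) (e e' j : nat) (a x : R) :=
  a ^+ e * (x ^+ e' * derive1n j sigma (a * x)).

Lemma Tm_bound (R : realType) (sigma : R -> R) (k e e' j : nat) (a x rho X S : R) :
  0 <= rho -> 0 <= X -> `|a| <= rho -> `|x| <= X -> (e <= k)%N -> (e' <= 2)%N ->
  (forall y, `|y| <= rho * X -> `|derive1n j sigma y| <= S) ->
  `|Tm sigma e e' j a x| <= (1 + rho) ^+ k * (1 + X) ^+ 2 * S.
Proof.
move=> r0 X0 ha hx hek he' hS.
have S0 : 0 <= S by apply: le_trans (hS 0 _); [exact: normr_ge0| rewrite normr0 mulr_ge0].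
rewrite /Tm !normrM !normrX mulrA.
apply: ler_pM; [by rewrite mulr_ge0 // exprn_ge0 | exact: normr_ge0 | | ].
  apply: ler_pM; rewrite ?exprn_ge0 //.
    apply: le_trans (_ : (1 + rho) ^+ e <= _).
      apply: lerXn2r; rewrite ?nnegrE //; [by rewrite addr_ge0 | lra].
    by apply: ler_weXn2l => //; lra.
  apply: le_trans (_ : (1 + X) ^+ e' <= _).
    apply: lerXn2r; rewrite ?nnegrE //; [by rewrite addr_ge0 | lra].
  by apply: ler_weXn2l => //; lra.
apply: hS; rewrite normrM; apply: ler_pM => //; exact: normr_ge0.
Qed.

Definition dphifun (R : realType) (sigma : R -> R) (k : nat) (a x : R) :=
  (k * k.-1)%:R * Tm sigma k.-1.-1 0 k a x + (2 * k)%:R * Tm sigma k.-1 1 k.+1 a x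
  + Tm sigma k 2 k.+2 a x.

Lemma hfun_der (R : realType) (sigma : R -> R) (k : nat) (a x : R) :
  (forall y, derivable (derive1n k sigma) y 1) ->
  is_derive a 1 (fun b => hfun sigma k b x) (phifun sigma k a x).
Proof.
move=> Hd; exact: der_pow_comp.
Qed.

Lemma phifun_der (R : realType) (sigma : R -> R) (k : nat) (a x : R) :
  (forall y, derivable (derive1n k sigma) y 1) ->
  (forall y, derivable (derive1n k.+1 sigma) y 1) ->
  is_derive a 1 (fun b => phifun sigma k b x) (dphifun sigma k a x).
Proof.
move=> H1 H2.
have -> : (fun b => phifun sigma k b x) = (fun b => k%:R * (b ^+ k.-1 * derive1n k sigma (b * x))
   + x * (b ^+ k * derive1n k.+1 sigma (b * x))).
  by apply/funext => b; rewrite /phifun; ring.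
have D1 := is_deriveMcst k%:R (@der_pow_comp R _ k.-1 x a (H1 (a * x))).
have D2 := is_deriveMcst x (@der_pow_comp R _ k x a (H2 (a * x))).
have := is_deriveD D1 D2.
move=> D; apply: (is_derive_eq D).
rewrite /dphifun /Tm !natrM /=.
rewrite -!derive1nS.
ring.
Qed.

Lemma fun_bounds (R : realType) (sigma : R -> R) (k : nat) (a x rho X S : R) :
  0 <= rho -> 0 <= X -> `|a| <= rho -> `|x| <= X ->
  (forall j y, (k <= j <= k.+2)%N -> `|y| <= rho * X -> `|derive1n j sigma y| <= S) ->
  let L := ((k.+1 ^ 2)%:R * ((1 + rho) ^+ k * (1 + X) ^+ 2 * S)) in
  [/\ `|hfun sigma k a x| <= L, `|phifun sigma k a x| <= L & `|dphifun sigma k a x| <= L].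
Proof.
move=> r0 X0 ha hx hS L.
set Bd := (1 + rho) ^+ k * (1 + X) ^+ 2 * S.
have TB : forall e e' j, (e <= k)%N -> (e' <= 2)%N -> (k <= j <= k.+2)%N ->
    `|Tm sigma e e' j a x| <= Bd.
  move=> e e' j he he' hj; apply: Tm_bound => //; move=> y hy; exact: hS.
have hk : (k <= k.+2)%N by rewrite leqW.
have hk1 : (k <= k.+1 <= k.+2)%N by rewrite leqnSn /=.
have hkk : (k <= k <= k.+2)%N by rewrite leqnn.
have S0 : 0 <= S.
  apply: le_trans (hS k 0 hkk _); [exact: normr_ge0 | by rewrite normr0 mulr_ge0].
have B0 : 0 <= Bd.
  rewrite /Bd; apply: mulr_ge0 => //; apply: mulr_ge0; apply: exprn_ge0; lra.
have hkk2 : (k <= k.+2 <= k.+2)%N by rewrite leqnn hk.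
have e1 : (k.-1 <= k)%N by apply: leq_pred.
have e2 : (k.-1.-1 <= k)%N by apply: leq_trans (leq_pred _) e1.
have LB : forall c : nat, (c <= k.+1 ^ 2)%N -> c%:R * Bd <= L.
  by move=> c hc; rewrite /L; apply: ler_wpM2r => //; rewrite ler_nat.
split.
- have -> : hfun sigma k a x = Tm sigma k 0 k a x by rewrite /hfun /Tm expr0 mul1r.
  apply: (le_trans (TB k 0 k (leqnn k) (leq0n 2) hkk)).
  by rewrite -[Bd]mul1r; apply: (LB 1); rewrite expn_gt0.
- have -> : phifun sigma k a x = k%:R * Tm sigma k.-1 0 k a x + Tm sigma k 1 k.+1 a x.
    by rewrite /phifun /Tm; ring.
  apply: le_trans (ler_normD _ _) _.
  apply: le_trans (_ : k%:R * Bd + Bd <= _).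
    apply: lerD; last exact: TB.
    by rewrite normrM normr_nat; apply: ler_wpM2l => //; apply: TB.
  have -> : k%:R * Bd + Bd = (k + 1)%:R * Bd by rewrite natrD mulrDl mul1r.
  apply: LB.
  by rewrite expnS expn1; nia.
- rewrite /dphifun.
  apply: le_trans (ler_normD _ _) _.
  apply: le_trans (_ : (k * k.-1)%:R * Bd + (2 * k)%:R * Bd + Bd <= _).
    apply: lerD; last exact: TB.
    apply: le_trans (ler_normD _ _) _.
    apply: lerD; rewrite normrM normr_nat; apply: ler_wpM2l => //; exact: TB.
  have -> : (k * k.-1)%:R * Bd + (2 * k)%:R * Bd + Bd = (k * k.-1 + 2 * k + 1)%:R * Bd.
    by rewrite !natrD !mulrDl mul1r.
  apply: LB.
  clear; case: k => [|k] //=.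
  rewrite expnS expn1.
  by rewrite mulSn mulnS mul2n; lia.
Qed.

Lemma sq_le (R : realType) (p q : R) : `|p| <= q -> p ^+ 2 <= q ^+ 2.
Proof.
move=> h; rewrite -real_normK ?num_real //.
apply: lerXn2r; rewrite ?nnegrE ?normr_ge0 //; exact: le_trans (normr_ge0 _) h.
Qed.

Lemma term0_bd (R : realType) (w1 v1 f g a rho L : R) :
  `|w1| <= rho -> `|f - g| <= L * `|a| -> `|g| <= L ->
  (w1 * f - v1 * g) ^+ 2 <= 2 * (rho * L) ^+ 2 * a ^+ 2 + 2 * L ^+ 2 * (w1 - v1) ^+ 2.
Proof.
move=> hw hfg hg.
have L0 : 0 <= L by exact: le_trans (normr_ge0 _) hg.
have r0 : 0 <= rho by exact: le_trans (normr_ge0 _) hw.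
have e : w1 * f - v1 * g = w1 * (f - g) + (w1 - v1) * g by ring.
have hu : (w1 * (f - g)) ^+ 2 <= (rho * L) ^+ 2 * a ^+ 2.
  rewrite -(real_normK (num_real a)) -exprMn; apply: sq_le.
  rewrite normrM -mulrA.
  by apply: ler_pM; rewrite ?normr_ge0.
have hv : ((w1 - v1) * g) ^+ 2 <= L ^+ 2 * (w1 - v1) ^+ 2.
  rewrite -(real_normK (num_real (w1 - v1))) -exprMn; apply: sq_le.
  rewrite normrM mulrC; apply: ler_pM; rewrite ?normr_ge0 //.
rewrite e.
set u := w1 * (f - g) in hu *; set v := (w1 - v1) * g in hv *.
have : 0 <= (u - v) ^+ 2 by apply: sqr_ge0.
nra.
Qed.

Lemma norm2_sq (R : realType) m (a : 'I_m -> R) r :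
  norm2 a <= r -> \sum_(i < m) a i ^+ 2 <= r ^+ 2.
Proof.
move=> h; rewrite -(@sqr_sqrtr _ (\sum_(i < m) a i ^+ 2)); last by apply: sumr_ge0 => i _; exact: sqr_ge0.
apply: sq_le; rewrite ger0_norm //; exact: sqrtr_ge0.
Qed.

Lemma det_bound (R : realType) (k m : nat) (sigma : R -> R) (W0 W1 V0 V1 : 'I_m -> R)
    (x rho L r : R) : 0 <= rho ->
  (forall j, (j < k.+2)%N -> forall y, derivable (derive1n j sigma) y 1) ->
  (forall a, `|a| <= rho ->
     [/\ `|hfun sigma k a x| <= L, `|phifun sigma k a x| <= L & `|dphifun sigma k a x| <= L]) ->
  (forall i, [/\ `|W0 i| <= rho, `|W1 i| <= rho, `|V0 i| <= rho & `|V1 i| <= rho]) ->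
  norm2 (fun i => W0 i - V0 i) <= r -> norm2 (fun i => W1 i - V1 i) <= r ->
  grad_diff_norm k sigma W0 W1 V0 V1 x ^+ 2 <= (m%:R)^-1 * (3 * ((1 + rho) * L * r) ^+ 2).
Proof.
move=> r0 Hd HB HW n0 n1.
set c := (Num.sqrt (m%:R : R))^-1.
have c2 : c ^+ 2 = (m%:R)^-1 by rewrite /c exprVn sqr_sqrtr // ler0n.
have Hd0 : forall j, (j < k.+1)%N -> forall y, derivable (derive1n j sigma) y 1.
  by move=> j hj; apply: Hd; apply: (ltn_trans hj).
have Hdk : forall y, derivable (derive1n k sigma) y 1 by apply: Hd; rewrite ltnS leqW.
have Hdk1 : forall y, derivable (derive1n k.+1 sigma) y 1 by apply: Hd.
have lipphi : forall a b, `|a| <= rho -> `|b| <= rho ->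
    `|phifun sigma k a x - phifun sigma k b x| <= L * `|a - b|.
  move=> a b ha hb.
  apply: (@lip_bound R (fun t => phifun sigma k t x) (fun t => dphifun sigma k t x) rho L b a) => //.
    by move=> t; apply: phifun_der.
  by move=> t ht; have [] := HB t ht.
have liph : forall a b, `|a| <= rho -> `|b| <= rho ->
    `|hfun sigma k a x - hfun sigma k b x| <= L * `|a - b|.
  move=> a b ha hb.
  apply: (@lip_bound R (fun t => hfun sigma k t x) (fun t => phifun sigma k t x) rho L b a) => //.
    by move=> t; apply: hfun_der.
  by move=> t ht; have [] := HB t ht.
rewrite /grad_diff_norm sqr_sqrtr; last first.
  by apply: addr_ge0; apply: sumr_ge0 => i _; exact: sqr_ge0.
set A := \sum_(i < m) (W0 i - V0 i) ^+ 2.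
set B := \sum_(i < m) (W1 i - V1 i) ^+ 2.
have hA : A <= r ^+ 2 by exact: norm2_sq.
have hB : B <= r ^+ 2 by exact: norm2_sq.
apply: le_trans (_ : c ^+ 2 * (2 * (rho * L) ^+ 2 * A + 2 * L ^+ 2 * B)
                   + c ^+ 2 * (L ^+ 2 * A) <= _).
  apply: lerD.
    rewrite /A /B !mulr_sumr -big_split mulr_sumr /=.
    apply: ler_sum => i _.
    rewrite !grad0_eq // -mulrBr exprMn.
    apply: ler_wpM2l; first exact: sqr_ge0.
    have [h0 h1 h2 h3] := HW i.
    apply: term0_bd => //; first exact: lipphi.
    by have [] := HB (V0 i) h2.
  rewrite /A !mulr_sumr; apply: ler_sum => i _.
  have Hdm : forall j, (j < k)%N -> forall y, derivable (derive1n j sigma) y 1.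
    by move=> j hj; apply: Hd0; apply: (ltn_trans hj).
  rewrite (grad1_eq _ _ _ _ Hdm) (grad1_eq _ _ _ _ Hdm) -mulrBr exprMn.
  apply: ler_wpM2l; first exact: sqr_ge0.
  rewrite -(real_normK (num_real (W0 i - V0 i))) -exprMn; apply: sq_le.
  have [h0 h1 h2 h3] := HW i.
  by apply: liph.
rewrite -mulrDr c2; apply: ler_wpM2l; first by rewrite invr_ge0 ler0n.
have p1 : 0 <= (rho * L) ^+ 2 by exact: sqr_ge0.
have p2 : 0 <= L ^+ 2 by exact: sqr_ge0.
have q1 : (rho * L) ^+ 2 * A <= (rho * L) ^+ 2 * r ^+ 2 by exact: ler_wpM2l.
have q2 : L ^+ 2 * A <= L ^+ 2 * r ^+ 2 by exact: ler_wpM2l.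
have q3 : L ^+ 2 * B <= L ^+ 2 * r ^+ 2 by exact: ler_wpM2l.
have q4 : 0 <= (L * r) ^+ 2 * (rho ^+ 2 + 6 * rho).
  by apply: mulr_ge0; [exact: sqr_ge0 | nra].
rewrite !exprMn in q1 q4 *.
nra.
Qed.

Lemma growth1 (R : realType) (s : R -> R) (l C : R) :
  0 < l -> (forall y, `|s y| <= C * (1 + `|y| `^ l)) ->
  exists D (N : nat), 0 <= D /\ forall y, `|s y| <= D * (1 + `|y|) ^+ N.
Proof.
move=> l0 H.
exists (`|C| * 2), (Num.truncn l).+1; split; first by rewrite mulr_ge0.
move=> y; apply: le_trans (H y) _.
have y0 : 0 <= `|y| by exact: normr_ge0.
have e1 : `|y| `^ l <= (1 + `|y|) ^+ (Num.truncn l).+1.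
  rewrite -powR_mulrn; last lra.
  apply: le_trans (_ : (1 + `|y|) `^ l <= _).
    apply: ge0_ler_powR; rewrite ?nnegrE; lra.
  apply: ler_powR; first lra.
  exact: ltW (Num.Theory.truncnS_gt l).
have e2 : 1 <= (1 + `|y|) ^+ (Num.truncn l).+1 by apply: exprn_ege1; lra.
have p0 : 0 <= `|y| `^ l by exact: powR_ge0.
apply: le_trans (_ : `|C| * (1 + `|y| `^ l) <= _).
  by apply: ler_wpM2r; [lra | exact: ler_norm].
rewrite -mulrA; apply: ler_wpM2l; first exact: normr_ge0.
lra.
Qed.


Lemma growth_bound (R : realType) (k : nat) (sigma : R -> R) :
  (1 <= k)%N -> activation_assumption k.+2 sigma ->
  exists D (N : nat), 0 <= D /\ forall j y, (k <= j <= k.+2)%N ->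
    `|derive1n j sigma y| <= D * (1 + `|y|) ^+ N.
Proof.
move=> k1 [_ [_ [l Hl]]].
have G : forall j, (k <= j <= k.+2)%N -> exists D (N : nat), 0 <= D /\
    forall y, `|derive1n j sigma y| <= D * (1 + `|y|) ^+ N.
  move=> j /andP [hj1 hj2].
  have [l0 [C HC]] := Hl j (introT andP (conj (leq_trans k1 hj1) hj2)).
  exact: growth1 l0 HC.
have [D0 [N0 [D00 H0]]] := G k (introT andP (conj (leqnn k) (leqW (leqW (leqnn k))))).
have [D1 [N1 [D10 H1]]] := G k.+1 (introT andP (conj (leqnSn k) (leqnSn k.+1))).
have [D2 [N2 [D20 H2]]] := G k.+2 (introT andP (conj (leqW (leqnSn k)) (leqnn _))).
exists (D0 + D1 + D2), (N0 + N1 + N2)%N; split; first by rewrite !addr_ge0.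
move=> j y /andP [hj1 hj2].
have y1 : 1 <= 1 + `|y| by rewrite lerDl normr_ge0.
have step : forall D N, 0 <= D -> D <= D0 + D1 + D2 -> (N <= N0 + N1 + N2)%N ->
    D * (1 + `|y|) ^+ N <= (D0 + D1 + D2) * (1 + `|y|) ^+ (N0 + N1 + N2)%N.
  move=> D N hD hD' hN; apply: ler_pM => //.
    exact: ler_weXn2l.
have [ej|[ej|ej]] : j = k \/ j = k.+1 \/ j = k.+2 by lia.
- rewrite ej; apply: le_trans (H0 y) _; apply: step => //; [ | lia].
  lra.
- rewrite ej; apply: le_trans (H1 y) _; apply: step => //; [ | lia].
  lra.
- rewrite ej; apply: le_trans (H2 y) _; apply: step => //; [ | lia].
  lra.
Qed.

Lemma T_bounded (R : realType) (T : set R) :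
  compact T -> exists X, 0 <= X /\ forall x, T x -> `|x| <= X.
Proof.
move=> /compact_bounded [M [Mreal]] /(_ (`|M| + 1)).
rewrite (le_lt_trans (ler_norm _)) ?ltrDl// => /(_ erefl) TM.
exists (`|M| + 1); split; first by rewrite addr_ge0.
by move=> x Tx; exact: TM.
Qed.

Lemma det_main (R : realType) (k : nat) (sigma : R -> R) (T : set R) :
  (1 <= k)%N -> activation_assumption k.+2 sigma -> compact T ->
  exists E (q : nat), 0 <= E /\ forall m (W0 W1 V0 V1 : 'I_m -> R) x rho r,
    0 <= rho -> T x ->
    (forall i, [/\ `|W0 i| <= rho, `|W1 i| <= rho, `|V0 i| <= rho & `|V1 i| <= rho]) ->
    norm2 (fun i => W0 i - V0 i) <= r -> norm2 (fun i => W1 i - V1 i) <= r ->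
    grad_diff_norm k sigma W0 W1 V0 V1 x ^+ 2 <= (m%:R)^-1 * (E * (1 + rho) ^+ q * r) ^+ 2.
Proof.
move=> k1 HA cT.
have [X [X0 HX]] := T_bounded cT.
have [D [N [D0 HD]]] := growth_bound k1 HA.
have Hd : forall j, (j < k.+2)%N -> forall y, derivable (derive1n j sigma) y 1.
  by case: HA => H _ j hj y; exact: H.
set K := ((k.+1 ^ 2)%:R : R).
have K0 : 0 <= K by rewrite /K ler0n.
exists (2 * (K * (1 + X) ^+ (2 + N) * D)), (k + N).+1; split.
  apply: mulr_ge0 => //; apply: mulr_ge0 => //; apply: mulr_ge0 => //; apply: exprn_ge0; lra.
move=> m W0 W1 V0 V1 x rho r r0 Tx HW n0 n1.
have hx := HX x Tx.
set S := D * (1 + rho * X) ^+ N.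
have hS : forall j y, (k <= j <= k.+2)%N -> `|y| <= rho * X -> `|derive1n j sigma y| <= S.
  move=> j y hj hy; apply: le_trans (HD j y hj) _.
  apply: ler_wpM2l => //; apply: lerXn2r; rewrite ?nnegrE.
  - exact: addr_ge0 ler01 (normr_ge0 _).
  - exact: addr_ge0 ler01 (mulr_ge0 r0 X0).
  - by rewrite lerD2l.
set L := K * ((1 + rho) ^+ k * (1 + X) ^+ 2 * S).
apply: le_trans (det_bound (L := L) r0 Hd _ HW n0 n1) _.
  by move=> a ha; apply: fun_bounds.
apply: ler_wpM2l; first by rewrite invr_ge0 ler0n.
set P := K * (1 + rho) ^+ k.+1 * (1 + X) ^+ 2 * D.
have P0 : 0 <= P.
  rewrite /P; apply: mulr_ge0 => //; apply: mulr_ge0; [apply: mulr_ge0 => //|]; apply: exprn_ge0; lra.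
have hY : (1 + rho * X) ^+ N <= (1 + X) ^+ N * (1 + rho) ^+ N.
  rewrite -exprMn; apply: lerXn2r; rewrite ?nnegrE; [nra | nra | nra].
have e1 : (1 + rho) * L = P * (1 + rho * X) ^+ N.
  by rewrite /L /S /P (exprS (1 + rho) k); ring.
have e2 : K * (1 + X) ^+ (2 + N) * D * (1 + rho) ^+ (k + N).+1
   = P * ((1 + X) ^+ N * (1 + rho) ^+ N).
  by rewrite /P exprD -addSn exprD; ring.
have hle : 0 <= (1 + rho) * L <= K * (1 + X) ^+ (2 + N) * D * (1 + rho) ^+ (k + N).+1.
  rewrite e1 e2; apply/andP; split; last exact: ler_wpM2l.
  apply: mulr_ge0 => //; apply: exprn_ge0; nra.
move/andP: hle => [h1 h2].
set a := (1 + rho) * L in h1 h2 *.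
set b := K * (1 + X) ^+ (2 + N) * D * (1 + rho) ^+ (k + N).+1 in h2 *.
have r2 : 0 <= r ^+ 2 by exact: sqr_ge0.
have : a ^+ 2 <= b ^+ 2 by apply: lerXn2r; rewrite ?nnegrE //; exact: le_trans h2.
move=> hab.
have -> : (2 * (K * (1 + X) ^+ (2 + N) * D) * (1 + rho) ^+ (k + N).+1 * r) = 2 * b * r.
  by rewrite /b; ring.
have q1 : 0 <= (b ^+ 2 - a ^+ 2) * r ^+ 2 by apply: mulr_ge0 => //; lra.
have q2 : 0 <= a ^+ 2 * r ^+ 2 by apply: mulr_ge0 => //; exact: sqr_ge0.
have -> : 3 * ((1 + rho) * L * r) ^+ 2 = 3 * (a ^+ 2 * r ^+ 2) by rewrite /a; ring.
have -> : (2 * b * r) ^+ 2 = 4 * (b ^+ 2 * r ^+ 2) by ring.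
lra.
Qed.


Lemma B_meas (R : realType) (M : R) : measurable [set y : R | M < `|y|].
Proof.
have := @normr_measurable R setT measurableT `]M, +oo[%classic (measurable_itv _).
by rewrite setTI; congr measurable; apply/seteqP; split => y /=; rewrite in_itv /= andbT.
Qed.

Section Prob.
Local Open Scope ereal_scope.

Lemma markov_even (R : realType) d (Omega : measurableType d) (P : probability Omega R)
   (Y : Omega -> R) (a : nat) (M : R) :
  measurable_fun setT Y -> P.-integrable setT (fun w => (Y w ^+ (2 * a))%R%:E) -> (0 < M)%R ->
  (M ^+ (2 * a))%R%:E * P (Y @^-1` [set y | (M < `|y|)%R]) <= \int[P]_w (Y w ^+ (2 * a))%R%:E.
Proof.
move=> mY iY M0.
have mD : measurable (Y @^-1` [set y | (M < `|y|)%R]).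
  by have := mY measurableT _ (B_meas M); rewrite setTI.
rewrite -integral_cst //.
apply: (@le_trans _ _ (\int[P]_(w in Y @^-1` [set y | (M < `|y|)%R]) (Y w ^+ (2 * a))%R%:E)).
  apply: ge0_le_integral => //.
  - by move=> w _; rewrite lee_fin exprn_ge0 // ltW.
  - apply/measurable_EFinP; apply: (measurable_funS measurableT) => //.
    exact: measurable_funX.
  - move=> w /= hw; rewrite lee_fin.
    rewrite !exprM; apply: lerXn2r; rewrite ?nnegrE ?sqr_ge0 //.
    have : (`|M| ^+ 2 <= `|Y w| ^+ 2)%R.
      by apply: lerXn2r; rewrite ?nnegrE ?normr_ge0 // ger0_norm ?ltW.
    by rewrite !real_normK ?num_real.
apply: ge0_subset_integral => //.
- by apply/measurable_EFinP; exact: measurable_funX.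
- by move=> w _; rewrite lee_fin exprM exprn_ge0 // sqr_ge0.
Qed.

End Prob.

Definition bad (R : realType) (Omega : Type) (Z : bool * nat -> Omega -> R) (M : R) (n : nat) :=
  [set w | exists i, (i < n)%N /\ ((M < `|Z (false, i) w|) \/ (M < `|Z (true, i) w|))].

Lemma badS (R : realType) (Omega : Type) (Z : bool * nat -> Omega -> R) (M : R) (n : nat) :
  bad Z M n.+1 = bad Z M n `|` Z (false, n) @^-1` [set y | M < `|y|]
                 `|` Z (true, n) @^-1` [set y | M < `|y|].
Proof.
apply/seteqP; split => w /=.
  move=> [i [hi [h|h]]].
    case: (ltngtP i n) => [lt|gt|eq]; first by left; left; exists i; split => //; left.
      by move: hi; rewrite ltnS leqNgt gt.
    by left; right; rewrite -eq.
  case: (ltngtP i n) => [lt|gt|eq]; first by left; left; exists i; split => //; right.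
    by move: hi; rewrite ltnS leqNgt gt.
  by right; rewrite -eq.
move=> [[[i [hi h]]|h]|h].
- by exists i; split => //; apply: ltnW.
- by exists n; split => //; left.
- by exists n; split => //; right.
Qed.

Lemma bad0 (R : realType) (Omega : Type) (Z : bool * nat -> Omega -> R) (M : R) :
  bad Z M 0 = set0.
Proof. by apply/seteqP; split => w //= [i [hi _]]. Qed.

Lemma bad_bound (R : realType) d (Omega : measurableType d) (P : probability Omega R)
   (Z : bool * nat -> Omega -> R) (M : R) :
  (forall j, measurable_fun setT (Z j)) -> identically_distributed P Z ->
  forall n, measurable (bad Z M n) /\
    (P (bad Z M n) <= ((2 * n)%:R * fine (P (Z (false, 0%N) @^-1` [set y | M < `|y|])))%:E)%E.
Proof.
move=> mZ iZ.
set B := [set y : R | M < `|y|].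
have mB : measurable B by exact: B_meas.
have mD : forall j, measurable (Z j @^-1` B).
  by move=> j; have := mZ j measurableT _ mB; rewrite setTI.
set t := P (Z (false, 0%N) @^-1` B).
have tfin : t = (fine t)%:E.
  rewrite fineK // ge0_fin_numE ?measure_ge0 //.
  by apply: le_lt_trans (probability_le1 _ (mD _)) _; rewrite ltry.
have hD : forall j, P (Z j @^-1` B) = (fine t)%:E.
  by move=> j; rewrite -tfin /t; apply: iZ.
elim => [|n [IHm IHb]].
  by rewrite bad0; split => //; rewrite measure0 muln0 mul0r.
rewrite badS; split; first by apply: measurableU => //; apply: measurableU.
apply: le_trans (measureU2 _ _ _) _ => //; first exact: measurableU.
apply: le_trans (leeD (measureU2 _ _ _) (lexx _)) _ => //.
apply: (@le_trans _ _ (((2 * n)%:R * fine t)%:E + (fine t)%:E + (fine t)%:E)).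
  have E : forall j, (P (Z j @^-1` B) <= (fine t)%:E)%E.
    by move=> j; rewrite le_eqVlt; apply/orP; left; apply/eqP; exact: hD.
  apply: leeD; [apply: leeD; [exact: IHb | exact: E] | exact: E].
rewrite -!EFinD lee_fin.
rewrite mulnS !natrD; lra.
Qed.


Lemma iroot (a : nat) : (0 < a)%N -> exists N : nat -> nat,
  (forall m, N m ^ a <= m)%N /\ (forall m, m < (N m).+1 ^ a)%N /\
  (forall n0, forall m, (n0 ^ a <= m)%N -> (n0 <= N m)%N).
Proof.
move=> a0.
have ex : forall m, exists n, (n ^ a <= m)%N && (m < n.+1 ^ a)%N.
  elim => [|m [n /andP [h1 h2]]].
    by exists 0%N; rewrite exp0n // exp1n.
  case: (leqP (n.+1 ^ a) m.+1) => h3.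
    exists n.+1; rewrite h3 /=.
    have : (n.+1 ^ a < n.+2 ^ a)%N by rewrite ltn_exp2r.
    lia.
  by exists n; rewrite h3 andbT; lia.
have [N HN] := choice ex.
exists N; split; first by move=> m; have /andP [] := HN m.
split; first by move=> m; have /andP [] := HN m.
move=> n0 m hm; have /andP [_ h2] := HN m.
rewrite leqNgt; apply/negP => h.
have : ((N m).+1 ^ a <= n0 ^ a)%N by rewrite leq_exp2r.
lia.
Qed.

Lemma cvgry_from (R : realType) (B : nat -> R) : (forall A : R, exists m0, forall m, (m0 <= m)%N -> A <= B m) -> B @ \oo --> +oo.
Proof.
move=> H; apply/cvgryPge => A.
have [m0 Hm] := H A.
exists m0 => // m /= hm; exact: Hm.
Qed.


Lemma arith1 (R : realType) (E K0 eta : R) (q N m : nat) :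
  0 <= E -> 1 <= K0 -> 0 < eta -> eta <= 1 -> (1 <= N)%N ->
  E ^+ 2 * (2 * (K0 + 1)) ^+ (2 * q) < N%:R -> (N ^ (2 * q.+2) <= m)%N ->
  forall rho r, 0 <= r -> r <= N%:R * eta -> 0 <= rho -> rho <= K0 * (N.+1)%:R + r ->
  (E * (1 + rho) ^+ q * r) ^+ 2 <= m%:R * eta ^+ 2.
Proof.
move=> E0 K1 e0 e1 N1 HC Hm rho r r0 hr rho0 hrho.
set b := 2 * (K0 + 1).
have Nr : 1 <= N%:R :> R by rewrite ler1n.
have NS : (N.+1)%:R = N%:R + 1 :> R by rewrite -addn1 natrD.
have h1 : 1 + rho <= b * N%:R.
  rewrite /b; rewrite NS in hrho.
  have hrN : r <= N%:R by apply: le_trans hr _; rewrite ler_piMr // ler0n.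
  have eb : (2 * (K0 + 1)) * N%:R = 2 * (K0 * N%:R) + 2 * N%:R by ring.
  have hk : K0 * (N%:R + 1) <= 2 * (K0 * N%:R).
    rewrite mulrA (mulrC 2) -mulrA; apply: ler_wpM2l; lra.
  rewrite eb; lra.
have b0 : 0 <= b by rewrite /b; lra.
have h2 : (1 + rho) ^+ q <= b ^+ q * N%:R ^+ q.
  rewrite -exprMn; apply: lerXn2r; [by rewrite nnegrE; lra | | exact: h1].
  by rewrite nnegrE mulr_ge0 // ler0n.
have p1 : 0 <= (1 + rho) ^+ q by apply: exprn_ge0; lra.
have h3 : E * (1 + rho) ^+ q * r <= E * (b ^+ q * N%:R ^+ q) * (N%:R * eta).
  apply: ler_pM; [exact: mulr_ge0 | exact: r0 | exact: ler_wpM2l | exact: hr].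
have h4 : (E * (1 + rho) ^+ q * r) ^+ 2 <= (E * (b ^+ q * N%:R ^+ q) * (N%:R * eta)) ^+ 2.
  have c0 : 0 <= E * (1 + rho) ^+ q * r by apply: mulr_ge0 => //; exact: mulr_ge0.
  apply: lerXn2r; [by rewrite nnegrE | rewrite nnegrE; exact: le_trans c0 h3 | exact: h3].
apply: le_trans h4 _.
have -> : (E * (b ^+ q * N%:R ^+ q) * (N%:R * eta)) ^+ 2
   = (E ^+ 2 * b ^+ (2 * q)) * (N%:R ^+ (2 * q).+2 * eta ^+ 2).
  have eb : b ^+ (2 * q) = (b ^+ q) ^+ 2 by rewrite mulnC exprM.
  have eN : (N%:R : R) ^+ (2 * q).+2 = ((N%:R : R) ^+ q) ^+ 2 * (N%:R : R) ^+ 2.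
    by rewrite -addn2 exprD mulnC exprM.
  rewrite eb eN; ring.
have e2 : 0 <= eta ^+ 2 by exact: sqr_ge0.
have Nq : 0 <= N%:R ^+ (2 * q).+2 :> R by rewrite exprn_ge0 // ler0n.
apply: le_trans (_ : N%:R * (N%:R ^+ (2 * q).+2 * eta ^+ 2) <= _).
  by apply: ler_wpM2r; [exact: mulr_ge0 | exact: ltW].
rewrite mulrA; apply: ler_wpM2r; first exact: e2.
rewrite -exprS; apply: le_trans (_ : N%:R ^+ (2 * q.+2) <= _).
  apply: ler_weXn2l; first exact: Nr.
  by rewrite !mulnS !addSn !add0n leqnSn.
by rewrite -natrX ler_nat.
Qed.


Lemma coord_le_norm2 (R : realType) m (a : 'I_m -> R) i : `|a i| <= norm2 a.
Proof.
rewrite /norm2 -sqrtr_sqr ler_sqrt; last by apply: sumr_ge0 => j _; exact: sqr_ge0.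
rewrite (bigD1 i) //= lerDl; apply: sumr_ge0 => j _; exact: sqr_ge0.
Qed.

Lemma P_fin (R : realType) d (Omega : measurableType d) (P : probability Omega R) (A : set Omega) :
  measurable A -> P A = (fine (P A))%:E.
Proof.
move=> mA; rewrite fineK // ge0_fin_numE ?measure_ge0 //.
by apply: le_lt_trans (probability_le1 _ mA) _; rewrite ltry.
Qed.

Lemma prob_arith (R : realType) (S t delta K0 Mv : R) (m : nat) :
  0 < delta -> 0 <= S -> K0 = 1 + 2 * S / delta -> 0 <= t ->
  K0 * m%:R <= Mv -> Mv * t <= S -> (2 * m)%:R * t <= delta.
Proof.
move=> d0 S0 eK t0 h1 h2.
have K1 : 1 <= K0 by rewrite eK lerDl; apply: divr_ge0; lra.
have h3 : K0 * (m%:R * t) <= S.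
  by apply: le_trans h2; rewrite mulrA; apply: ler_wpM2r.
have h4 : delta * K0 = delta + 2 * S by rewrite eK mulrDr mulr1 mulrCA divff ?mulr1 // gt_eqF.
rewrite natrM.
have h5 : K0 * (2 * (m%:R * t)) <= K0 * delta by nra.
have : 2 * (m%:R * t) <= delta by rewrite -(ler_pM2l (_ : 0 < K0)) //; lra.
by rewrite mulrA.
Qed.

Unset Implicit Arguments. Set Strict Implicit. Set Printing Implicit Defensive.

Theorem lemma6 (R : realType) (d : measure_display) (Omega : measurableType d)
    (P : probability Omega R) (Z : bool * nat -> Omega -> R)
    (sigma : R -> R) (T : set R) (k : nat) :
  iid_init P Z ->
  convex_R T -> compact T ->
  (1 <= k)%N ->
  activation_assumption k.+2 sigma ->
  forall delta : R, 0 < delta ->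
  exists (B : nat -> R) (eta : R -> R),
    B @ \oo --> +oo /\
    (forall eps, 0 < eps -> 0 < eta eps) /\
    forall m : nat,
      let W00 := fun w (i : 'I_m) => Z (false, val i) w in
      let W10 := fun w (i : 'I_m) => Z (true, val i) w in
      exists A : set Omega, measurable A /\ (P A >= (1 - delta)%:E)%E /\
        forall w, A w ->
          forall eps, 0 < eps ->
          forall W0 W1 : 'I_m -> R,
            norm2 (fun i => W0 i - W00 w i) <= B m * eta eps ->
            norm2 (fun i => W1 i - W10 w i) <= B m * eta eps ->
            forall x, T x ->
              grad_diff_norm k sigma W0 W1 (W00 w) (W10 w) x <= eps.
Proof.
move=> HZ cvx cT k1 HA delta d0.
have [E [q [E0 Hdet]]] := det_main k1 HA cT.
case: HZ => [mZ [_ [iZ [intZ _]]]].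
set s := q.+2.
set Y := Z (false, 0%N).
set S := fine (\int[P]_w (Y w ^+ (2 * s))%:E).
have Sfin : (\int[P]_w (Y w ^+ (2 * s))%:E = S%:E)%E.
  by rewrite fineK // integrable_fin_num // intZ.
have S0 : 0 <= S.
  apply: fine_ge0; apply: integral_ge0 => w _.
  by rewrite lee_fin exprM exprn_ge0 // sqr_ge0.
set K0 := 1 + 2 * S / delta.
have K1 : 1 <= K0 by rewrite /K0 lerDl; apply: divr_ge0; lra.
have [N [HN1 [HN2 HN3]]] : exists N : nat -> nat,
  (forall m, N m ^ (2 * s) <= m)%N /\ (forall m, m < (N m).+1 ^ (2 * s))%N /\
  (forall n0, forall m, (n0 ^ (2 * s) <= m)%N -> (n0 <= N m)%N) by apply: iroot.
set C := E ^+ 2 * (2 * (K0 + 1)) ^+ (2 * q).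
set n0 := (Num.truncn C).+1.
have hC : C < n0%:R by exact: Num.Theory.truncnS_gt.
exists (fun m => if (n0 <= N m)%N then (N m)%:R else 0), (fun e => Num.min e 1).
split.
  apply: cvgry_from => A.
  set n1 := maxn n0 (Num.truncn A).+1.
  exists (n1 ^ (2 * s))%N => m hm.
  have hn : (n1 <= N m)%N := HN3 n1 m hm.
  rewrite (leq_trans (leq_maxl _ _) hn).
  apply: le_trans (ltW (Num.Theory.truncnS_gt A)) _.
  by rewrite ler_nat; apply: leq_trans (leq_maxr _ _) hn.
split.
  by move=> e e0; rewrite lt_min e0 ltr01.
move=> m W00 W10.
set M := K0 * ((N m).+1)%:R.
have M0 : 0 < M by rewrite /M mulr_gt0 // ?ltr0n //; lra.
have [mbad hbad] := bad_bound M mZ iZ m.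
exists (~` bad Z M m); split; first exact: measurableC.
split.
  set D := Z (false, 0%N) @^-1` [set y | M < `|y|].
  have mD : measurable D by have := mZ (false, 0%N) measurableT _ (B_meas M); rewrite setTI.
  set t := fine (P D).
  have t0 : 0 <= t by apply: fine_ge0; exact: measure_ge0.
  have hmk := markov_even (mZ (false, 0%N)) (intZ (false, 0%N) (2 * s)) M0.
  rewrite -/Y -/D Sfin (P_fin P mD) -EFinM lee_fin -/t in hmk.
  have hK : K0 * m%:R <= M ^+ (2 * s).
    rewrite /M exprMn; apply: ler_pM; rewrite ?ler0n //; first lra.
      by apply: ler_eXnr => //; rewrite muln_gt0.
    by rewrite -natrX ler_nat ltnW.
  have h2 := prob_arith d0 S0 (erefl K0) t0 hK hmk.
  rewrite probability_setC //.
  rewrite (P_fin P mbad) in hbad *.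
  rewrite lee_fin in hbad.
  rewrite -EFinB lee_fin.
  have : fine (P (bad Z M m)) <= delta by apply: le_trans hbad h2.
  lra.
move=> w Aw eps e0 W0 W1 hn0 hn1 x Tx.
have hV : forall i : 'I_m, `|W00 w i| <= M /\ `|W10 w i| <= M.
  move=> i; split; rewrite leNgt; apply/negP => h; apply: Aw;
    exists (val i); (split; [exact: ltn_ord | first [by left | by right]]).
set eta := Num.min eps 1.
have eta0 : 0 < eta by rewrite lt_min e0 ltr01.
have eta1 : eta <= 1 by rewrite ge_min lexx orbT.
have etae : eta <= eps by rewrite ge_min lexx.
set r := (if (n0 <= N m)%N then (N m)%:R else 0) * eta.
have r0 : 0 <= r by apply: le_trans hn0; exact: sqrtr_ge0.
set rho := M + r.
have rho0 : 0 <= rho by rewrite /rho; lra.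
have HW : forall i : 'I_m, [/\ `|W0 i| <= rho, `|W1 i| <= rho, `|W00 w i| <= rho & `|W10 w i| <= rho].
  move=> i; have [h1 h2] := hV i.
  have c1 := le_trans (coord_le_norm2 (fun i => W0 i - W00 w i) i) hn0.
  have c2 := le_trans (coord_le_norm2 (fun i => W1 i - W10 w i) i) hn1.
  rewrite /= -/eta -/r in c1 c2.
  split; rewrite /rho; try lra.
  - have -> : W0 i = W00 w i + (W0 i - W00 w i) by ring.
    apply: le_trans (ler_normD _ _) _; lra.
  - have -> : W1 i = W10 w i + (W1 i - W10 w i) by ring.
    apply: le_trans (ler_normD _ _) _; lra.
have HD := Hdet m W0 W1 (W00 w) (W10 w) x rho r rho0 Tx HW hn0 hn1.
have key : m%:R^-1 * (E * (1 + rho) ^+ q * r) ^+ 2 <= eps ^+ 2.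
  have ee : eta ^+ 2 <= eps ^+ 2.
    by apply: lerXn2r; rewrite ?nnegrE; try lra.
  case: (leqP n0 (N m)) => hN.
    have hr : r <= (N m)%:R * eta by rewrite /r hN.
    have hrho : rho <= K0 * ((N m).+1)%:R + r by rewrite /rho /M.
    have hCN : C < (N m)%:R by apply: lt_le_trans hC _; rewrite ler_nat.
    have X := @arith1 R E K0 eta q (N m) m E0 K1 eta0 eta1
      (leq_trans (ltn0Sn _) hN) hCN (HN1 m) rho r r0 hr rho0 hrho.
    apply: le_trans (_ : m%:R^-1 * (m%:R * eta ^+ 2) <= _).
      by apply: ler_wpM2l => //; rewrite invr_ge0 ler0n.
    case: (posnP m) => [m0|mp].
      by rewrite m0 invr0 mul0r; exact: sqr_ge0.
    by rewrite mulrA mulVf ?mul1r // pnatr_eq0 -lt0n.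
  have -> : r = 0 by rewrite /r leqNgt hN /= mul0r.
  by rewrite mulr0 expr0n /= mulr0; exact: sqr_ge0.
have g0 : 0 <= grad_diff_norm k sigma W0 W1 (W00 w) (W10 w) x by exact: sqrtr_ge0.
rewrite -(ler_pXn2r (_ : (0 < 2)%N)) ?nnegrE //; last lra.
exact: le_trans HD key.
Qed.
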